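(* Let $\mathcal C,\mathcal D\subseteq\{0,1\}^n$ be neural codes and $q:\mathcal C\to\mathcal D$ a code map, with pullback ring homomorphism $\phi_q:R_\mathcal D\to R_\mathcal C$, $\phi_q(f)=f\circ q$. Then $\phi_q$ is an $R[n]$-module homomorphism if and only if $q$ is an inclusion map, i.e. $q(c)=c$ for all $c\in\mathcal C$ (so $\mathcal C\subseteq\mathcal D$); and $\phi_q$ is an $R[n]$-module isomorphism if and only if $\mathcal C=\mathcal D$ and $q$ is the identity.
   Context: For a code $\mathcal C\subseteq\{0,1\}^n$, $R_\mathcal C$ is the ring of all functions $\mathcal C\to\mathbb F_2$ (equivalently $\mathbb F_2[x_1,\dots,x_n]$ modulo the ideal of polynomials vanishing on $\mathcal C$). $R[n]=\mathbb F_2[x_1,\dots,x_n]/\langle x_i^2-x_i: i\in[n]\rangle$, and $R_\mathcal C$ is an $R[n]$-module via $(r\cdot f)(c)=r(c)f(c)$ for $c\in\mathcal C$. A code map is any function $q:\mathcal C\to\mathcal D$. *)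

(* Defs.v *)
From HB Require Import structures.
From mathcomp Require Import all_boot all_algebra.
From mathcomp Require Import mpoly.
Set Implicit Arguments. Unset Strict Implicit. Unset Printing Implicit Defensive.
Import GRing.Theory.
Local Open Scope ring_scope.

Definition word (n : nat) := {ffun 'I_n -> bool}.
Definition code (n : nat) := {set word n}.

Definition elts n (C : code n) := {c : word n | c \in C}.

Definition RC n (C : code n) := elts C -> 'F_2.

Definition RC_add n (C : code n) (f g : RC C) : RC C := fun c => f c + g c.
Definition RC_mul n (C : code n) (f g : RC C) : RC C := fun c => f c * g c.

Definition pt n (c : word n) : 'I_n -> 'F_2 := fun i => (c i)%:R.

(* R[n] = F_2[x_1..x_n]/<x_i^2 - x_i>.  Elements of R[n] are represented by
   polynomials in {mpoly 'F_2[n]}; the action on R_C is by evaluation at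
   codewords, which is well defined on the quotient since every x_i^2 - x_i
   vanishes on {0,1}^n. *)
Definition Rn_act n (C : code n) (r : {mpoly 'F_2[n]}) (f : RC C) : RC C :=
  fun c => r.@[pt (val c)] * f c.

Definition pullback n (C D : code n) (q : elts C -> elts D) (f : RC D) : RC C :=
  fun c => f (q c).

Definition Rn_module_hom n (C D : code n) (phi : RC D -> RC C) : Prop :=
  (forall f g, phi (RC_add f g) = RC_add (phi f) (phi g)) /\
  (forall (r : {mpoly 'F_2[n]}) f, phi (Rn_act r f) = Rn_act r (phi f)).

Definition Rn_module_iso n (C D : code n) (phi : RC D -> RC C) : Prop :=
  Rn_module_hom phi /\ bijective phi.

(* Main.v *)
Require Import Defs.
From mathcomp Require Import all_boot all_algebra.
From mathcomp Require Import mpoly.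
From Stdlib Require Import FunctionalExtensionality.
Import GRing.Theory.
Local Open Scope ring_scope.

Lemma hom_iff (n : nat) (C D : code n) (q : elts C -> elts D) :
  (Rn_module_hom (pullback q) <-> (forall c : elts C, val (q c) = val c)).
Proof.
split.
- move=> [_ H] c; apply/ffunP => i.
  have := congr1 (fun f => f c) (H 'X_i (fun _ => 1)).
  rewrite /pullback /Rn_act /= !mevalXU /pt !mulr1.
  by case: (val (q c) i); case: (val c i) => //= /eqP; rewrite ?oner_eq0 ?(eq_sym 0) ?oner_eq0.
- move=> H; split=> [f g|r f]; first by [].
  apply: functional_extensionality => c.
  by rewrite /pullback /Rn_act H.
Qed.

Theorem lemma4 (n : nat) (C D : code n) (q : elts C -> elts D) :
  (Rn_module_hom (pullback q) <-> (forall c : elts C, val (q c) = val c)) /\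
  (Rn_module_iso (pullback q) <->
     (C = D /\ forall c : elts C, val (q c) = val c)).
Proof.
split; first exact: hom_iff.
split.
- move=> [/hom_iff H [g gK Kg]].
  have sub : forall d : elts D, val d \in C.
    move=> d; case: (boolP (val d \in C)) => // Hn.
    pose f : RC D := fun e => if val e == val d then 1 else 0.
    have E : pullback q f = pullback q (fun _ => 0).
      apply: functional_extensionality => c; rewrite /pullback /f H.
      case: eqP => // E; move: (valP c); rewrite E => Hc.
      by rewrite Hc in Hn.
    have := congr1 g E; rewrite !gK => /(congr1 (fun h => h d)).
    by rewrite /f eqxx => /eqP; rewrite oner_eq0.
  split=> //; apply/setP => x; apply/idP/idP => Hx.
  + by have := valP (q (exist _ x Hx)); rewrite H.
  + exact: (sub (exist _ x Hx)).
- move=> [CD H]; split; first exact/hom_iff.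
  have sub : forall d : elts D, val d \in C by move=> d; rewrite CD (valP d).
  pose q' (d : elts D) : elts C := exist _ (val d) (sub d).
  exists (pullback q') => f; apply: functional_extensionality => x;
    rewrite /pullback; congr f; apply: val_inj => /=; by rewrite ?H.
Qed.
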